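(* Let $k$ be a field and $d\le n$ integers in $\mathbb{N}$. The morphism $$\beta_{d,n}:Q_d\times\mathcal{L}_n\mathbb{G}_m\to\mathcal{L}_n^{\le d}\mathbb{A}^1,\qquad (q,u)\mapsto qu,$$ is smooth.
   Context: $\mathcal{L}_n\mathbb{A}^1=\operatorname{Spec}k[x_0,\ldots,x_n]$ is the space of $n$-jets of $\mathbb{A}^1$, with $R$-points $R[t]/(t^{n+1})$; $\mathcal{L}_n\mathbb{G}_m$ is the space of $n$-jets of $\mathbb{G}_m$, with $R$-points $(R[t]/(t^{n+1}))^\times$. For $d\le n$, $\mathcal{L}_n^{\le d}\mathbb{A}^1$ is the open subscheme of $\mathcal{L}_n\mathbb{A}^1$ where $x_0,\ldots,x_d$ do not all vanish. $Q_d$ is the affine space of monic polynomials of degree $d$; $qu$ is taken modulo $t^{n+1}$. *)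

(* Defs.v *)
From HB Require Import structures.
From mathcomp Require Import all_boot all_order all_algebra.
Set Implicit Arguments. Unset Strict Implicit. Unset Printing Implicit Defensive.
Import GRing.Theory.
Local Open Scope ring_scope.

(* Functor-of-points description of the schemes involved, on a commutative
   k-algebra R.  An R-point of L_n A^1 is a jet x_0 + x_1 t + ... + x_n t^n,
   stored as its coefficient vector {ffun 'I_n.+1 -> R}. *)

(* The monic polynomial t^d + a_{d-1} t^{d-1} + ... + a_0 attached to an
   R-point a of Q_d = A^d. *)
Definition monic_of (R : comNzRingType) (d : nat) (a : {ffun 'I_d -> R}) : {poly R} :=
  'X^d + \sum_(j < d) a j *: 'X^j.

Definition jet_poly (R : comNzRingType) (n : nat) (u : {ffun 'I_n.+1 -> R}) : {poly R} :=
  \poly_(i < n.+1) u (inord i).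

Definition beta (R : comNzRingType) (d n : nat) (a : {ffun 'I_d -> R})
    (u : {ffun 'I_n.+1 -> R}) : {ffun 'I_n.+1 -> R} :=
  [ffun i : 'I_n.+1 => (monic_of a * jet_poly u)`_i].

(* R-points of L_n G_m : jets whose constant term is invertible. *)
Definition is_Gm_jet (R : comNzRingType) (n : nat) (u : {ffun 'I_n.+1 -> R}) : Prop :=
  exists v : R, u ord0 * v = 1.

(* R-points of L_n^{<= d} A^1 : jets such that x_0, ..., x_d generate the
   unit ideal of R (i.e. Spec R -> L_n A^1 factors through the open
   subscheme where x_0, ..., x_d do not all vanish). *)
Definition is_le_d_jet (R : comNzRingType) (d n : nat) (x : {ffun 'I_n.+1 -> R}) : Prop :=
  exists c : 'I_n.+1 -> R, \sum_(i < n.+1 | (i <= d)%N) c i * x i = 1.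

(* Formal smoothness of beta_{d,n} : Q_d x L_n G_m -> L_n^{<= d} A^1
   (EGA IV 17.1.1, infinitesimal lifting property for affine test schemes
   Spec S -> Spec R over the target, with square-zero ideal ker pi):
   for every surjective k-algebra map pi : R -> S of commutative k-algebras
   with square-zero kernel, every R-point x of the target and every S-point
   (abar, ubar) of the source with beta(abar, ubar) = pi(x), there is an
   R-point (a, u) of the source lifting (abar, ubar) with beta(a, u) = x. *)
Definition beta_formally_smooth (k : fieldType) (d n : nat) : Prop :=
  forall (R S : comAlgType k) (pi : {rmorphism R -> S}),
    (forall c : k, pi (c%:A) = c%:A) ->
    (forall s : S, exists r : R, pi r = s) ->
    (forall r1 r2 : R, pi r1 = 0 -> pi r2 = 0 -> r1 * r2 = 0) ->
    forall (x : {ffun 'I_n.+1 -> R}) (abar : {ffun 'I_d -> S})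
           (ubar : {ffun 'I_n.+1 -> S}),
      is_le_d_jet d x ->
      is_Gm_jet ubar ->
      beta abar ubar = [ffun i => pi (x i)] ->
      exists (a : {ffun 'I_d -> R}) (u : {ffun 'I_n.+1 -> R}),
        [/\ is_Gm_jet u, beta a u = x,
            [ffun j => pi (a j)] = abar & [ffun i => pi (u i)] = ubar].

(* Main.v *)
Require Import Defs.
From mathcomp Require Import all_boot all_order all_algebra.
From mathcomp Require Import zify ring.
Set Implicit Arguments. Unset Strict Implicit.
Import GRing.Theory.
Local Open Scope ring_scope.

Definition eqm (R : comNzRingType) (n : nat) (p q : {poly R}) :=
  forall i, (i <= n)%N -> p`_i = q`_i.
Arguments eqm {R} n p q.

Lemma eqmM (R : comNzRingType) n (p p' q : {poly R}) :
  eqm n p p' -> eqm n (p * q) (p' * q).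
Proof.
move=> h i hi; rewrite !coefM; apply: eq_bigr => j _.
by rewrite h // (leq_trans _ hi) // -ltnS.
Qed.

Lemma powN0 (R : comNzRingType) (N : {poly R}) : N`_0 = 0 ->
  forall m i, (i < m)%N -> (N ^+ m)`_i = 0.
Proof.
move=> h0; elim=> [|m IH] i //.
move=> him; rewrite exprS coefM big1 // => [[j hj]] _ /=.
case: j hj => [|j] hj; first by rewrite h0 mul0r.
rewrite IH ?mulr0 //; rewrite ltnS in him hj.
lia.
Qed.

Lemma inv_trunc (R : comNzRingType) n (P : {poly R}) (cc : R) :
  P`_0 * cc = 1 -> exists V, eqm n (V * P) 1.
Proof.
move=> hc; set c' := cc; pose N := 1 - c' *: P.
have hN0 : N`_0 = 0 by rewrite /N coefB coefZ coef1 mulrC hc subrr.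
exists (c' *: \sum_(k < n.+1) N ^+ k).
have -> : (c' *: \sum_(k < n.+1) N ^+ k) * P = 1 - N ^+ n.+1.
  rewrite -scalerAl scalerAr.
  have -> : c' *: P = 1 - N by rewrite /N opprB addrC subrK.
  rewrite mulrC.
  by rewrite -[1 - N]opprB mulNr -subrX1 opprB.
move=> i hi; rewrite coefB powN0 // ?subr0 //.
Qed.

Section Main.
Variables (k : fieldType) (R S : comAlgType k) (pi : {rmorphism R -> S}).
Hypothesis hsurj : forall s : S, exists r : R, pi r = s.
Hypothesis hsq : forall r1 r2 : R, pi r1 = 0 -> pi r2 = 0 -> r1 * r2 = 0.

Lemma unit_lift (c : R) (s : S) : pi c * s = 1 -> exists c', c * c' = 1.
Proof.
move=> h; have [v hv] := hsurj s.
pose f := c * v - 1.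
have hf : pi f = 0 by rewrite rmorphB rmorphM hv h rmorph1 subrr.
exists (v * (1 - f)); rewrite mulrA.
have -> : c * v = 1 + f by rewrite /f addrC subrK.
by rewrite mulrBr mulr1 mulrDl mul1r (hsq hf hf) addr0 addrK.
Qed.

Lemma unit_pert (c c' e : R) : c * c' = 1 -> pi e = 0 -> exists v, (c + e) * v = 1.
Proof.
move=> h he; have [v hv] : exists v, pi (c + e) * v = 1.
  by exists (pi c'); rewrite rmorphD he addr0 -rmorphM h rmorph1.
exact: unit_lift hv.
Qed.

End Main.

Lemma size_monic_of (R : comNzRingType) d (a : {ffun 'I_d -> R}) :
  (size (\sum_(j < d) a j *: 'X^j)%R <= d)%N.
Proof.
apply/leq_sizeP => j hj; rewrite coef_sum big1 // => i _.
by rewrite coefZ coefXn (gtn_eqF (leq_trans (ltn_ord i) hj)) mulr0.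
Qed.

Lemma monic_of_monic (R : comNzRingType) d (a : {ffun 'I_d -> R}) :
  monic_of a \is monic /\ size (monic_of a) = d.+1.
Proof.
have hs : (size (\sum_(j < d) a j *: 'X^j)%R < size ('X^d : {poly R}))%N.
  by rewrite size_polyXn ltnS size_monic_of.
split; first by rewrite /monic_of monicE lead_coefDl // lead_coefXn.
by rewrite /monic_of size_polyDl // size_polyXn.
Qed.

Theorem proposition3p9 (k : fieldType) (d n : nat) (hdn : (d <= n)%N) :
  beta_formally_smooth k d n.
Proof.
move=> R S pi hk hsurj hsq x abar ubar _ [vb hvb] hbeta.
have [a0f ha0f] := fin_all_exists (fun j => hsurj (abar j)).
have [u0f hu0f] := fin_all_exists (fun j => hsurj (ubar j)).
pose a0 := finfun a0f.
have ha0 j : pi (a0 j) = abar j by rewrite ffunE ha0f.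
pose u0 := finfun u0f.
have hu0 j : pi (u0 j) = ubar j by rewrite ffunE hu0f.
pose q0 := monic_of a0. pose U0 := jet_poly u0.
have [q0m q0s] := monic_of_monic a0.
have mq0 : map_poly pi q0 = monic_of abar.
  rewrite /q0 /monic_of rmorphD /= map_polyXn rmorph_sum /=; congr (_ + _).
  by apply: eq_bigr => j _; rewrite map_polyZ map_polyXn ha0.
have mU0 : map_poly pi U0 = jet_poly ubar.
  apply/polyP => i; rewrite coef_map /U0 /jet_poly !coef_poly.
  by case: (i < n.+1)%N; [exact: hu0 | exact: rmorph0].
have U00 : U0`_0 = u0 ord0.
  by rewrite /U0 /jet_poly coef_poly /=; congr (u0 _); apply: val_inj; rewrite /= inordK.
have [c' hc'] : exists c', u0 ord0 * c' = 1 by apply: (unit_lift hsurj hsq); rewrite hu0; exact: hvb.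
have [V hV] : exists V, eqm n (V * U0) 1 by apply: (@inv_trunc _ n U0 c'); rewrite U00.
pose Z := \poly_(i < n.+1) (x (inord i) - (q0 * U0)`_i).
have hZ : eqm n Z (jet_poly x - q0 * U0).
  by move=> i hi; rewrite coefB /jet_poly !coef_poly ltnS hi.
have mqU : map_poly pi (q0 * U0) = monic_of abar * jet_poly ubar.
  by rewrite rmorphM /= mq0 mU0.
have kZ : map_poly pi Z = 0.
  apply/polyP => i; rewrite coef_map coef0 coef_poly.
  case: ltnP => hi; last exact: rmorph0.
  have := congr1 (fun f : {ffun 'I_n.+1 -> S} => f (inord i)) hbeta; rewrite /= !ffunE => e.
  by rewrite rmorphB -coef_map mqU -[X in X - _]e inordK // subrr.
pose Y := Z * V.
have kY : map_poly pi Y = 0 by rewrite rmorphM /= kZ mul0r.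
pose W := Pdiv.Ring.rdivp Y q0. pose r := Pdiv.Ring.rmodp Y q0.
have hdiv : Y = W * q0 + r by exact: Pdiv.RingMonic.rdivp_eq.
have q0n0 : q0 != 0 by rewrite -size_poly_eq0 q0s.
have rs : (size r <= d)%N by rewrite -ltnS -q0s Pdiv.Ring.ltn_rmodpN0.
have [mq0m mq0s] := monic_of_monic abar.
have mrs : (size (map_poly pi r) <= d)%N.
  apply/leq_sizeP => j hj; rewrite coef_map.
  rewrite nth_default; [exact: rmorph0 | exact (leq_trans rs hj)].

have kW : map_poly pi W = 0.
  apply/eqP; apply: contraT => hW.
  have e : map_poly pi W * monic_of abar = - map_poly pi r.
    by apply/eqP; rewrite -addr_eq0 -mq0 -!rmorphM -rmorphD /= -hdiv kY.
  have := congr1 (fun p : {poly S} => size p) e; rewrite size_opp size_Mmonic // mq0s addnS /=.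
  move=> h; rewrite -size_poly_gt0 in hW; move: mrs; rewrite -h; by rewrite -{2}[d]add0n leq_add2r leqNgt hW.
have kr : map_poly pi r = 0.
  by move: kY; rewrite hdiv rmorphD rmorphM /= kW mul0r add0r.
have kc (p : {poly R}) i : map_poly pi p = 0 -> pi p`_i = 0.
  by move=> h; rewrite -coef_map h coef0.
have rW0 : r * W = 0.
  apply/polyP => i; rewrite coefM coef0 big1 // => j _.
  by apply: hsq; apply: kc.
pose a := [ffun j : 'I_d => a0 j + r`_j].
pose u := [ffun i : 'I_n.+1 => (U0 + W * U0)`_i].
have ma : monic_of a = q0 + r.
  rewrite /monic_of -addrA; congr (_ + _).
  rewrite (eq_bigr (fun j : 'I_d => a0 j *: 'X^j + r`_j *: 'X^j)); last first.
    by move=> j _; rewrite ffunE scalerDl.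
  rewrite big_split /=; congr (_ + _).
  rewrite -poly_def; apply/polyP => i; rewrite coef_poly.
  case: ltnP => // hi; rewrite nth_default //. exact (leq_trans rs hi).
have ju : eqm n (jet_poly u) (U0 + W * U0).
  by move=> i hi; rewrite /jet_poly coef_poly ltnS hi ffunE inordK.
have kWU : map_poly pi (W * U0) = 0 by rewrite rmorphM /= kW mul0r.
exists a, u; split.
- have [v hv] : exists v, (u0 ord0 + (W * U0)`_0) * v = 1.
    apply: (unit_pert hsurj hsq hc'); exact: kc.
  by exists v; rewrite ffunE /= coefD U00.
- apply/ffunP => i; rewrite !ffunE ma.
  have hi : (i <= n)%N by rewrite -ltnS.
  rewrite mulrC (eqmM _ ju) // mulrC.
  have -> : (q0 + r) * (U0 + W * U0) = q0 * U0 + Z * (V * U0).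
    rewrite mulrA -/Y hdiv.
    have -> : (q0 + r) * (U0 + W * U0) = q0 * U0 + (W * q0 + r) * U0 + (r * W) * U0 by ring.
    by rewrite rW0 mul0r addr0.
  rewrite coefD [Z * _]mulrC (eqmM Z hV) // mul1r hZ // coefB /jet_poly coef_poly ltn_ord inord_val.
  by rewrite addrC subrK.
- by apply/ffunP => j; rewrite !ffunE rmorphD ?ha0 ?ha0f kc // addr0.
- apply/ffunP => i; rewrite !ffunE coefD rmorphD (kc (W * U0)) // addr0.
  by rewrite /U0 /jet_poly coef_poly ltn_ord inord_val hu0.
Qed.
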